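(* Let $m\ge1$, let $r_1\le r_2\le\dots\le r_m$ be positive integers, let $\lambda_1,\dots,\lambda_m>0$, let $P_j$ ($j=1,\dots,m$) be matrices, let $\iota_{ji}>0$ for $1\le i<j\le m$, and let $\varrho_0\ge0$. Then there exist constants $g_i>0$, $i=1,\dots,m$, independent of $\kappa$, and $\theta^*>1$ such that for all $\kappa\ge\theta^*$, $$\frac{\lambda_m}{2}\ell_m^2-\varrho_0\ge\kappa\ell_m,$$ $$\frac{\lambda_i}{4}\ell_i^2-\sum_{j=i+1}^m\frac{2(j-1)|P_j|^2\iota_{ji}^2}{\lambda_j}\ell_j^{2(r_j-r_i+1)}-\varrho_0\ge\kappa\ell_i,\qquad 1\le i\le m-1,$$ hold with $$\ell_m=g_m\kappa,\qquad \ell_i=g_i\,(\ell_{i+1})^{r_{i+1}-r_i+1}\ \text{ for }1\le i\le m-1.$$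
   Context: $|\cdot|$ denotes the Euclidean norm / induced matrix norm. In the paper, $\lambda_i$, $P_j$ are those of a preceding Lyapunov-type lemma, $\iota_{ji}$ are bounds on interconnection gains, and $\varrho_0=\lambda_{\min}|P|^2\mu_0^2|K|^2\delta_2^2/8$; the claim concerns these given constants. *)

(* Defs.v *)
From HB Require Import structures.
From mathcomp Require Import all_boot all_order all_algebra.
Set Implicit Arguments. Unset Strict Implicit. Unset Printing Implicit Defensive.
Import Order.TTheory GRing.Theory Num.Theory.
Local Open Scope ring_scope.

(* ellrev m r g kappa k = ell_(m-k), computed downward from ell_m = g_m kappa,
   ell_i = g_i * ell_(i+1)^(r_(i+1) - r_i + 1). *)
Fixpoint ellrev (R : realFieldType) (m : nat) (r : nat -> nat) (g : nat -> R)
    (kappa : R) (k : nat) : R :=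
  match k with
  | 0 => g m * kappa
  | k'.+1 => let i := (m - k'.+1)%N in
             g i * (ellrev m r g kappa k') ^+ (r i.+1 - r i + 1)%N
  end.

Definition ell (R : realFieldType) (m : nat) (r : nat -> nat) (g : nat -> R)
    (kappa : R) (i : nat) : R := ellrev m r g kappa (m - i).

(* Main.v *)
Require Import Defs.
From HB Require Import structures.
From mathcomp Require Import all_boot all_order all_algebra.
From mathcomp Require Import ring lra zify.
Import Order.TTheory GRing.Theory Num.Theory.
Local Open Scope ring_scope.

Lemma ell_succ (R : realFieldType) m r (g : nat -> R) k i : (i < m)%N ->
  ell m r g k i = g i * ell m r g k i.+1 ^+ (r i.+1 - r i + 1)%N.
Proof.
move=> him; rewrite /ell.
have -> : (m - i = (m - i.+1).+1)%N by lia.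
rewrite /=.
have -> : (m - (m - i.+1).+1 = i)%N by lia.
by [].
Qed.

Lemma ell_m (R : realFieldType) m r (g : nat -> R) k : ell m r g k m = g m * k.
Proof. by rewrite /ell subnn. Qed.

Lemma ell_ge (R : realFieldType) m r (g : nat -> R) k :
  (forall i, (1 <= i <= m)%N -> 1 <= g i) -> 1 <= k ->
  forall n i, (1 <= i)%N -> (i <= m)%N -> (m - i = n)%N ->
  k <= ell m r g k i /\ 1 <= ell m r g k i.
Proof.
move=> hg hk; elim=> [|n IH] i h1 h2 h3.
  have him : i = m by lia.
  subst i; rewrite ell_m; have hgm : 1 <= g m by apply: hg; lia.
  split; nra.
have him : (i < m)%N by lia.
rewrite ell_succ //.
have [IH1 IH2] := IH i.+1 isT him ltac:(lia).
set y := ell m r g k i.+1 in IH1 IH2 *.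
have hy : y <= y ^+ (r i.+1 - r i + 1)%N by apply: ler_eXnr; lia.
have hgi : 1 <= g i by apply: hg; lia.
split; nra.
Qed.

Lemma ell_key (R : realFieldType) m (r : nat -> nat) (g : nat -> R) k :
  (forall i, (1 <= i <= m)%N -> 1 <= g i) -> 1 <= k ->
  (forall i j, (1 <= i)%N -> (i <= j)%N -> (j <= m)%N -> (r i <= r j)%N) ->
  forall i n, (1 <= i)%N -> (i.+1 + n <= m)%N ->
  ell m r g k (i.+1 + n) ^+ (r (i.+1 + n) - r i + 1)%N
    <= ell m r g k i.+1 ^+ (r i.+1 - r i + 1)%N.
Proof.
move=> hg hk hr i; elim=> [|n IH] h1 h2; first by rewrite addn0.
apply: le_trans (IH h1 ltac:(lia)).
set j := (i.+1 + n)%N.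
have -> : (i.+1 + n.+1 = j.+1)%N by rewrite /j addnS.
rewrite [ell m r g k j]ell_succ; last by rewrite /j; lia.
have [_ Hy] := @ell_ge _ m r g k hg hk (m - j.+1) j.+1 isT ltac:(rewrite /j; lia) erefl.
set y := ell m r g k j.+1 in Hy *.
have hgj : 1 <= g j by apply: hg; rewrite /j; lia.
have hrij : (r i <= r j)%N by apply: hr; rewrite /j; lia.
have hrj : (r j <= r j.+1)%N by apply: hr; rewrite /j; lia.
apply: le_trans (_ : (y ^+ (r j.+1 - r j + 1)) ^+ (r j - r i + 1) <= _).
  rewrite -exprM; apply: ler_weXn2l => //; nia.
apply: lerXn2r; rewrite ?nnegrE.
- by apply: exprn_ge0; lra.
- apply: mulr_ge0; first lra. by apply: exprn_ge0; lra.
- have h0 : 0 <= y ^+ (r j.+1 - r j + 1) by apply: exprn_ge0; lra.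
  nra.
Qed.

(* normP j stands for the matrix norm |P_j| (any nonnegative real). *)
Theorem lemma4 (R : realFieldType) (m : nat) (r : nat -> nat)
    (lam : nat -> R) (normP : nat -> R) (iota : nat -> nat -> R) (rho0 : R) :
  (1 <= m)%N ->
  (forall i, (1 <= i <= m)%N -> (0 < r i)%N) ->
  (forall i j, (1 <= i)%N -> (i <= j)%N -> (j <= m)%N -> (r i <= r j)%N) ->
  (forall i, (1 <= i <= m)%N -> 0 < lam i) ->
  (forall j, (1 <= j <= m)%N -> 0 <= normP j) ->
  (forall i j, (1 <= i)%N -> (i < j)%N -> (j <= m)%N -> 0 < iota j i) ->
  0 <= rho0 ->
  exists g : nat -> R,
    (forall i, (1 <= i <= m)%N -> 0 < g i) /\
    exists theta : R, 1 < theta /\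
      forall kappa : R, theta <= kappa ->
        lam m / 2 * (ell m r g kappa m) ^+ 2 - rho0 >= kappa * ell m r g kappa m /\
        forall i, (1 <= i)%N -> (i <= m - 1)%N ->
          lam i / 4 * (ell m r g kappa i) ^+ 2
          - (\sum_(i.+1 <= j < m.+1)
               (2 * (j - 1)%:R * normP j ^+ 2 * iota j i ^+ 2 / lam j
                * (ell m r g kappa j) ^+ (2 * (r j - r i + 1))%N))
          - rho0 >= kappa * ell m r g kappa i.
Proof.
move=> hm hr0 hr hlam hP hio hrho.
pose c i j := 2 * (j - 1)%:R * normP j ^+ 2 * iota j i ^+ 2 / lam j.
pose S i := \sum_(i.+1 <= j < m.+1) c i j.
pose g i := 4 * (S i + rho0 + 1) / lam i + 1.
have hc : forall i j, (1 <= i)%N -> (i < j)%N -> (j <= m)%N -> 0 <= c i j.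
  move=> i j h1 h2 h3; rewrite /c.
  have hl : 0 < lam j by apply: hlam; lia.
  apply: divr_ge0; last lra.
  apply: mulr_ge0; last by apply: exprn_ge0; have := hio i j h1 h2 h3; lra.
  apply: mulr_ge0; last by apply: exprn_ge0; apply: hP; lia.
  by apply: mulr_ge0; [lra | apply: ler0n].
have hS : forall i, (1 <= i)%N -> 0 <= S i.
  move=> i h1; rewrite /S big_nat_cond; apply: sumr_ge0 => j /andP[/andP[hj1 hj2] _].
  apply: hc; lia.
have hgT : forall i, (1 <= i <= m)%N -> lam i * g i = 4 * (S i + rho0 + 1) + lam i.
  move=> i hi; have hl := hlam i hi; rewrite /g mulrDr mulr1 mulrC divfK //; exact: lt0r_neq0.
have hg1 : forall i, (1 <= i <= m)%N -> 1 <= g i.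
  move=> i hi; have hl := hlam i hi; rewrite /g.
  have := hS i ltac:(lia) => hs.
  have : 0 <= 4 * (S i + rho0 + 1) / lam i by apply: divr_ge0; lra.
  lra.
exists g; split; first by move=> i hi; have := hg1 i hi; lra.
exists 2; split; first lra.
move=> kappa hk.
have hk1 : 1 <= kappa by lra.
split.
  rewrite ell_m.
  have hmm : (1 <= m <= m)%N by lia.
  have hT := hgT m hmm; have hG := hg1 m hmm; have hl := hlam m hmm.
  have hs := hS m hm.
  set G := g m in hT hG *.
  have e : lam m / 2 * (G * kappa) ^+ 2 = (lam m * G) / 2 * G * (kappa * kappa).
    by rewrite expr2; field.
  rewrite e hT.
  have hkk : 1 <= kappa * kappa by nra.
  have hGk : 1 <= G * (kappa * kappa) by nra.
  nra.
move=> i h1 h2.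
have him : (i < m)%N by lia.
have hi : (1 <= i <= m)%N by lia.
rewrite (@ell_succ _ m r g kappa i him).
have [hkY hY1] := @ell_ge _ m r g kappa hg1 hk1 (m - i.+1) i.+1 isT him erefl.
set Y := ell m r g kappa i.+1 in hkY hY1 *.
set X := Y ^+ (r i.+1 - r i + 1)%N.
have hYX : Y <= X by apply: ler_eXnr; lia.
have hsum : \sum_(i.+1 <= j < m.+1)
     (2 * (j - 1)%:R * normP j ^+ 2 * iota j i ^+ 2 / lam j
       * (ell m r g kappa j) ^+ (2 * (r j - r i + 1))%N) <= S i * X ^+ 2.
  rewrite /S mulr_suml big_nat_cond [X in _ <= X]big_nat_cond.
  apply: ler_sum => j /andP[/andP[hj1 hj2] _].
  apply: ler_wpM2l; first by apply: hc; lia.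
  rewrite mulnC exprM.
  have [_ hE1] := @ell_ge _ m r g kappa hg1 hk1 (m - j) j ltac:(lia) ltac:(lia) erefl.
  apply: lerXn2r; rewrite ?nnegrE.
  - by apply: exprn_ge0; lra.
  - by apply: exprn_ge0; lra.
  have -> : j = (i.+1 + (j - i.+1))%N by lia.
  apply: ell_key => //; lia.
have hT := hgT i hi; have hG := hg1 i hi; have hl := hlam i hi.
have hs := hS i h1.
set G := g i in hT hG *.
have e : lam i / 4 * (G * X) ^+ 2 = (lam i * G) / 4 * G * (X * X).
  by rewrite expr2; field.
rewrite e hT.
rewrite expr2 in hsum.
have hXX : 1 <= X * X by nra.
have hGX : 1 <= G * (X * X) by nra.
have hkX : kappa * (G * X) <= G * (X * X) by nra.
nra.
Qed.
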